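(* Let $p$ be a positive integer, $L,E,\sigma>0$ with $L,E\in 2^{-p}\mathbb{Z}$, and $\epsilon>0$ with $\sigma\ge\max\left(\frac{2}{\epsilon},2^{-p}\right)$. Then the truncated cumulative Laplace mechanism $\mathcal{M}^{(\mathtt{CLap})}_{L,E,\sigma,p}$ satisfies $d_\chi$-privacy with respect to the $\ell_1$ distance: for all $x,x'\in\mathcal{A}_{p,E}$ and all $z\in\mathcal{B}_{p,L+E}$, \[ f^{(\mathtt{CLap})}_{x,\sigma}(z)\le e^{\epsilon|x-x'|}f^{(\mathtt{CLap})}_{x',\sigma}(z). \]
   Context: For $p\in\mathbb{Z}_{>0}$ and $B>0$, $2^{-p}\mathbb{Z}=\{a/2^p: a\in\mathbb{Z}\}$, $\mathcal{A}_{p,B}:=[-B,B]\cap 2^{-p}\mathbb{Z}$ and $\mathcal{B}_{p,B}:=\mathcal{A}_{p,B}\setminus\{B\}$. The truncated cumulative Laplace mechanism $\mathcal{M}^{(\mathtt{CLap})}_{L,E,\sigma,p}$ with parameters $L,E,\sigma>0$ maps $x\in\mathcal{A}_{p,E}$ to $y\in\mathcal{B}_{p,L+E}$ with probability $f^{(\mathtt{CLap})}_{x,\sigma}(y)=\frac{1}{\lambda^{(\mathtt{CLap})}_{L,E,\sigma}}\int_y^{y+2^{-p}}e^{-\min(|r-x|,L)/\sigma}dr$, where $\lambda^{(\mathtt{CLap})}_{L,E,\sigma}=\sum_{y\in\mathcal{B}_{p,L+E}}\int_y^{y+2^{-p}}e^{-\min(|r-x|,L)/\sigma}dr$ is the normalizing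 constant (independent of $x$). *)

(* Defs.v *)
From Stdlib Require Import Reals ZArith List.
From Coquelicot Require Import Coquelicot.
Open Scope R_scope.

Definition dyadic (p : nat) (x : R) : Prop := exists a : Z, x = IZR a / 2 ^ p.

Definition setA (p : nat) (B x : R) : Prop := dyadic p x /\ - B <= x <= B.

Definition setB (p : nat) (B y : R) : Prop := setA p B y /\ y <> B.

(* integer indices a such that a / 2^p ∈ B_{p,B}, enumerated as a list *)
Definition idxB (p : nat) (B : R) : list Z :=
  let hi := Int_part (B * 2 ^ p) in
  let lo := (- hi)%Z in
  filter (fun a => if Req_EM_T (IZR a / 2 ^ p) B then false
                   else if Rle_dec (- B) (IZR a / 2 ^ p) then true else false)
    (map (fun k => (lo + Z.of_nat k)%Z) (seq 0 (Z.to_nat (hi - lo + 1)))).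

Definition clap_kernel (L sigma x r : R) : R := exp (- Rmin (Rabs (r - x)) L / sigma).

Definition clap_cell (L sigma : R) (p : nat) (x y : R) : R :=
  RInt (clap_kernel L sigma x) y (y + / 2 ^ p).

Definition clap_lambda (L E sigma : R) (p : nat) (x : R) : R :=
  fold_right Rplus 0
    (map (fun a => clap_cell L sigma p x (IZR a / 2 ^ p)) (idxB p (L + E))).

Definition clap_f (L E sigma : R) (p : nat) (x y : R) : R :=
  clap_cell L sigma p x y / clap_lambda L E sigma p x.

(* Main.v *)
Require Import Defs.
From Stdlib Require Import Reals ZArith List Lra.
From Coquelicot Require Import Coquelicot.
Open Scope R_scope.

Lemma Rmin_alt (a b : R) : Rmin a b = (a + b - Rabs (a - b)) / 2.
Proof. unfold Rmin; destruct (Rle_dec a b); unfold Rabs; destruct (Rcase_abs (a-b)); lra. Qed.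

Lemma kern_cont L s x r : continuous (clap_kernel L s x) r.
Proof.
  apply continuity_pt_filterlim.
  apply (continuity_pt_ext (fun r => exp ((- / (2*s)) * ((Rabs (r - x) + L) - Rabs (Rabs (r - x) - L))))).
  { intros y. unfold clap_kernel. rewrite Rmin_alt. unfold Rdiv.
    destruct (Req_dec s 0) as [->|Hs].
    - rewrite Rmult_0_r, Rinv_0. f_equal; ring.
    - rewrite Rinv_mult. f_equal; ring. }
  apply (continuity_pt_comp (fun r => (- / (2*s)) * ((Rabs (r - x) + L) - Rabs (Rabs (r - x) - L))) exp).
  2: apply derivable_continuous_pt, derivable_pt_exp.
  apply continuity_pt_scal.
  apply continuity_pt_minus.
  - apply continuity_pt_plus; [|apply continuity_pt_const; intros a b; reflexivity].
    apply (continuity_pt_comp (fun r => r - x) Rabs); [|apply Rcontinuity_abs].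
    apply continuity_pt_minus; [apply continuity_pt_id|apply continuity_pt_const; intros a b; reflexivity].
  - apply (continuity_pt_comp (fun r => Rabs (r - x) - L) Rabs); [|apply Rcontinuity_abs].
    apply continuity_pt_minus; [|apply continuity_pt_const; intros a b; reflexivity].
    apply (continuity_pt_comp (fun r => r - x) Rabs); [|apply Rcontinuity_abs].
    apply continuity_pt_minus; [apply continuity_pt_id|apply continuity_pt_const; intros a b; reflexivity].
Qed.

Lemma kern_ex L s x a b : ex_RInt (clap_kernel L s x) a b.
Proof. apply (ex_RInt_continuous (V:=R_CompleteNormedModule)). intros; apply kern_cont. Qed.

Lemma min_tri a b c L : Rmin (Rabs (a - c)) L <= Rabs (b - c) + Rmin (Rabs (a - b)) L.
Proof.
  pose proof (Rabs_triang (a - b) (b - c)). replace (a - b + (b - c)) with (a - c) in H by ring.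
  pose proof (Rabs_pos (b - c)).
  unfold Rmin; destruct (Rle_dec (Rabs (a - c)) L); destruct (Rle_dec (Rabs (a - b)) L); lra.
Qed.

Lemma exp_mono a b : a <= b -> exp a <= exp b.
Proof. intros [H|H]; [left; apply exp_increasing; exact H | right; subst; reflexivity]. Qed.

Lemma kern_le L s x x' r : 0 < s ->
  clap_kernel L s x r <= exp (Rabs (x - x') / s) * clap_kernel L s x' r.
Proof.
  intros Hs. unfold clap_kernel. rewrite <- exp_plus.
  apply exp_mono.
  pose proof (min_tri r x x' L) as H.
  assert (Hi : 0 < / s) by (apply Rinv_0_lt_compat; lra).
  assert (Rmin (Rabs (r - x')) L * / s <= (Rabs (x - x') + Rmin (Rabs (r - x)) L) * /s)
    by (apply Rmult_le_compat_r; lra).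
  unfold Rdiv. lra.
Qed.

Lemma step_pos (p : nat) : 0 < / 2 ^ p.
Proof. apply Rinv_0_lt_compat, pow_lt; lra. Qed.

Lemma cell_nonneg L s p x y : 0 <= clap_cell L s p x y.
Proof.
  unfold clap_cell. pose proof (step_pos p).
  apply RInt_ge_0; [lra|apply kern_ex|]. intros; unfold clap_kernel; left; apply exp_pos.
Qed.

Lemma cell_le L s p x x' y : 0 < s ->
  clap_cell L s p x y <= exp (Rabs (x - x') / s) * clap_cell L s p x' y.
Proof.
  intros Hs. unfold clap_cell. pose proof (step_pos p).
  assert (E : RInt (fun r => exp (Rabs (x - x') / s) * clap_kernel L s x' r) y (y + / 2 ^ p)
     = exp (Rabs (x - x') / s) * RInt (clap_kernel L s x') y (y + / 2 ^ p)).
  { exact (RInt_scal (V:=R_CompleteNormedModule) _ _ _ _ (kern_ex L s x' _ _)). }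
  rewrite <- E. apply RInt_le; [lra|apply kern_ex| |].
  - apply (ex_RInt_scal (V:=R_CompleteNormedModule) (clap_kernel L s x')). apply kern_ex.
  - intros; apply kern_le; auto.
Qed.

Lemma sum_nonneg (F : Z -> R) l : (forall a, 0 <= F a) -> 0 <= fold_right Rplus 0 (map F l).
Proof. intros H; induction l; simpl; [lra|]. specialize (H a); lra. Qed.

Lemma sum_le (F G : Z -> R) c l : (forall a, F a <= c * G a) ->
  fold_right Rplus 0 (map F l) <= c * fold_right Rplus 0 (map G l).
Proof. intros H; induction l; simpl; [lra|]. specialize (H a); lra. Qed.

Theorem mainTheorem10 (p : nat) (L E sigma eps : R) :
  (0 < p)%nat -> 0 < L -> 0 < E -> 0 < sigma -> 0 < eps ->
  dyadic p L -> dyadic p E ->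
  Rmax (2 / eps) (/ 2 ^ p) <= sigma ->
  forall x x' z : R,
    setA p E x -> setA p E x' -> setB p (L + E) z ->
    clap_f L E sigma p x z <= exp (eps * Rabs (x - x')) * clap_f L E sigma p x' z.
Proof.
  intros Hp HL HE Hs He _ _ Hmax x x' z _ _ _.
  set (c := exp (Rabs (x - x') / sigma)).
  assert (Hc : 0 < c) by apply exp_pos.
  pose proof (cell_le L sigma p x x' z Hs) as C1.
  pose proof (cell_nonneg L sigma p x z) as N1.
  pose proof (cell_nonneg L sigma p x' z) as N2.
  assert (L1 : clap_lambda L E sigma p x' <= c * clap_lambda L E sigma p x).
  { unfold clap_lambda. apply sum_le. intros a.
    unfold c; rewrite Rabs_minus_sym. apply cell_le; auto. }
  assert (L2 : clap_lambda L E sigma p x <= c * clap_lambda L E sigma p x').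
  { unfold clap_lambda. apply sum_le. intros a. apply cell_le; auto. }
  assert (P1 : 0 <= clap_lambda L E sigma p x) by (apply sum_nonneg; intros; apply cell_nonneg).
  assert (P2 : 0 <= clap_lambda L E sigma p x') by (apply sum_nonneg; intros; apply cell_nonneg).
  assert (Hcc : c * c <= exp (eps * Rabs (x - x'))).
  { unfold c; rewrite <- exp_plus. apply exp_mono.
    assert (2 / eps <= sigma) by (eapply Rle_trans; [apply Rmax_l|exact Hmax]).
    assert (2 <= eps * sigma).
    { apply (Rmult_le_compat_l eps) in H; [|lra].
      unfold Rdiv in H. rewrite <- Rmult_assoc, (Rmult_comm eps 2), Rmult_assoc, Rinv_r, Rmult_1_r in H; lra. }
    pose proof (Rabs_pos (x - x')).
    unfold Rdiv. replace (Rabs (x - x') * / sigma + Rabs (x - x') * / sigma)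
      with (Rabs (x - x') * 2 * / sigma) by ring.
    apply (Rmult_le_reg_r sigma); [lra|].
    rewrite Rmult_assoc, Rinv_l by lra. nra. }
  unfold clap_f.
  set (lx := clap_lambda L E sigma p x) in *.
  set (lx' := clap_lambda L E sigma p x') in *.
  set (cx := clap_cell L sigma p x z) in *.
  set (cx' := clap_cell L sigma p x' z) in *.
  assert (R0 : 0 <= exp (eps * Rabs (x - x')) * (cx' / lx')).
  { apply Rmult_le_pos; [left; apply exp_pos|].
    destruct P2 as [P2|P2]; [|rewrite <- P2; unfold Rdiv; rewrite Rinv_0; lra].
    unfold Rdiv; apply Rmult_le_pos; [lra|left; apply Rinv_0_lt_compat; lra]. }
  destruct P1 as [P1|P1].
  2:{ rewrite <- P1; unfold Rdiv; rewrite Rinv_0, Rmult_0_r; exact R0. }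
  assert (Q : 0 < lx') by nra.
  apply Rle_trans with (c * c * (cx' / lx')).
  - unfold Rdiv. apply (Rmult_le_reg_r (lx * lx')); [apply Rmult_lt_0_compat; lra|].
    replace (cx * / lx * (lx * lx')) with (cx * lx') by (field; lra).
    replace (c * c * (cx' * / lx') * (lx * lx')) with ((c * cx') * (c * lx)) by (field; lra).
    fold c in C1. apply Rmult_le_compat; lra.
  - apply Rmult_le_compat_r; [|exact Hcc].
    unfold Rdiv; apply Rmult_le_pos; [lra|left; apply Rinv_0_lt_compat; lra].
Qed.
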